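(* Let $U$ be a set and $\mathcal{C}\subset\mathcal{P}(U)$ a collection of subsets of $U$ with $\emptyset\in\mathcal{C}$. Then at least one of the following holds: (a) $\mathcal{C}=\mathcal{P}(X)$ for some $X\subset U$; (b) there exists $T\subset U$ with $|T|\ge2$ such that $\mathcal{C}\cap\mathcal{P}(T)=\mathcal{P}(T)-\{T\}$; (c) there exist $S\subset U$ with $|S|\ge2$ and $s\in S$ such that $\{C\in\mathcal{C}:\ s\in C\}\cap\mathcal{P}(S)=\{S\}$.
   Context: $\mathcal{P}(Y)$ denotes the power set of a set $Y$. *)

(* Defs.v *)
From mathcomp Require Import all_boot.
Set Implicit Arguments. Unset Strict Implicit. Unset Printing Implicit Defensive.

(* Main.v *)
Require Import Defs.
From mathcomp Require Import all_boot.

Theorem lemma2p4 (U : finType) (C : {set {set U}}) (hC : set0 \in C) :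
  (exists X : {set U}, C = powerset X)
  \/ (exists T : {set U}, 2 <= #|T| /\ C :&: powerset T = powerset T :\ T)
  \/ (exists (S : {set U}) (s : U),
        [/\ 2 <= #|S|, s \in S & [set A in C | s \in A] :&: powerset S = [set S]]).
Proof.
case: (boolP [exists x, exists A, [&& A \in C, x \in A & [set x] \notin C]]).
  move=> /existsP [x /existsP [A0 /and3P [A0C xA0 nx]]].
  right; right.
  have P0 : (fun S : {set U} => (S \in C) && (x \in S)) A0 by rewrite /= A0C.
  case: (@arg_minnP _ _ [pred S : {set U} | (S \in C) && (x \in S)] (fun S : {set U} => #|S|) P0) => S /andP [SC xS] Smin.
  exists S, x; split => //.
    have ne : [set x] != S by apply: contra nx => /eqP ->.
    have pr : [set x] \proper S by rewrite properEneq ne sub1set xS.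
    by have := proper_card pr; rewrite cards1.
  apply/setP => B; rewrite !inE.
  case: (eqVneq B S) => [->|nBS]; first by rewrite SC xS subxx.
  apply/negbTE; apply/negP => /andP [/andP [BC xB] BS].
  have pr : B \proper S by rewrite properEneq nBS BS.
  have := Smin B; rewrite inE /= BC xB => /(_ isT).
  by rewrite leqNgt (proper_card pr).
rewrite negb_exists => /forallP H.
have Hs : forall x A, A \in C -> x \in A -> [set x] \in C.
  move=> x A hAC xA; have := H x; rewrite negb_exists => /forallP /(_ A).
  by rewrite hAC xA /= negbK.
set X := \bigcup_(A in C) A.
have CX : C \subset powerset X.
  by apply/subsetP => A hAC; rewrite inE; apply: bigcup_sup hAC.
case: (eqVneq C (powerset X)) => [->|nCX]; first by left; exists X.
right; left.
have : ~~ (powerset X \subset C) by apply: contra nCX => h; rewrite eqEsubset CX h.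
case/subsetPn => B0; rewrite inE => B0X B0C.
have P0 : (fun B : {set U} => (B \subset X) && (B \notin C)) B0 by rewrite /= B0X B0C.
case: (@arg_minnP _ _ [pred B : {set U} | (B \subset X) && (B \notin C)] (fun S : {set U} => #|S|) P0) => T /andP [TX TC] Tmin.
exists T; split.
  have h0 : #|T| != 0.
    rewrite cards_eq0; apply: contra TC => /eqP ->; exact: hC.
  have h1 : #|T| != 1.
    apply/negP => /cards1P [y Ty]; move: TC TX; rewrite Ty sub1set => TC.
    case/bigcupP => A hAC yA; by rewrite (Hs y A hAC yA) in TC.
  by move: h0 h1; case: #|T| => [|[|n]].
apply/setP => B; rewrite !inE.
case: (eqVneq B T) => [->|nBT]; first by rewrite (negbTE TC).
rewrite andbC /=; case BT: (B \subset T) => //=.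
apply/negP => /negP BC.
have pr : B \proper T by rewrite properEneq nBT BT.
have := Tmin B; rewrite inE /= BC (subset_trans BT TX) => /(_ isT).
by rewrite leqNgt (proper_card pr).
Qed.
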